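(* If $X$ is a finite quasi-metric space, then the Euler characteristic of its realized magnitude nerve is equal to the alternating sum of the ranks of its magnitude homology groups: \[ \chi(B(\Sigma X,\mathbb{1}))= \sum_n (-1)^n \,\mathrm{rk}\, \mathit{HM}_n(X), \] the infinite sum converging in the topology of $\mathbb{Q}(\!(q^\mathbb{R})\!)$.
   Context: A quasi-metric space is a skeletal $[0,\infty)$-enriched category (distances may be asymmetric, $d(x,y)>0$ for $x\ne y$). Let $\mathbf{A}=\prod_\mathbb{R}\mathrm{Ab}$ be $\mathbb{R}$-graded abelian groups with convolution tensor product $(A\otimes B)_\ell=\bigoplus_{j+k=\ell}A_j\otimes B_k$, and $\mathbf{W}=\mathrm{Ch}_\mathbf{A}$. Define $\Sigma:[0,\infty)\to\mathbf{W}$ by $\Sigma(\ell)=\mathbb{Z}$ in chain degree 0 and grading $\ell$, and $0$ elsewhere. $\mathbb{Q}(\!(q^\mathbb{R})\!)$ is the field of Hahn series $\sum_\ell a_\ell q^\ell$ ($a_\ell\in\mathbb{Q}$, well-ordered support), with the valuation topology (a series of Hahn series converges iff the smallest exponents of its terms tend to $\infty$). The Euler characteristic $\chi$ of a (Hahn finite) object of $\mathbf{W}$ is the Hahn series whose $q^\ell$-coefficient is the usual Euler characteristic of the grading-$\ell$ part; the rank of an $\mathbb{R}$-graded abelian group is likewise the Hahn series of the ranks of its graded pieces. The realized magnitude nerve $B(\Sigma X,\mathbb{1})$ is (after normalization) the chain complex whose $n$-chains in grading $\ell$ are freely generated by tuples $(x_0,\dots,x_n)$ with $x_i\neq x_{i+1}$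 and $d(x_0,x_1)+\cdots+d(x_{n-1},x_n)=\ell$, with boundary the alternating sum of the face maps $d^i$, where $d^i$ deletes $x_i$ if this does not change the total distance and is $0$ otherwise. Magnitude homology $\mathit{HM}_n(X)=\{\mathit{HM}^\ell_n(X)\}_{\ell\in\mathbb{R}}$ is the homology of this complex. *)

(* Defs.v *)
From HB Require Import structures.
From mathcomp Require Import all_boot all_order all_algebra.
From mathcomp Require Import boolp classical_sets fsbigop reals.
Set Implicit Arguments. Unset Strict Implicit. Unset Printing Implicit Defensive.
Import Order.TTheory GRing.Theory Num.Theory.
Local Open Scope ring_scope.

Section Magnitude.
Variables (R : realType) (T : finType) (d : T -> T -> R).

(* A (finite) quasi-metric space: skeletal [0,oo)-enriched category. *)
Definition quasi_metric : Prop :=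
  [/\ forall x, d x x = 0,
      forall x y, 0 <= d x y,
      forall x y, x != y -> 0 < d x y
    & forall x y z, d x z <= d x y + d y z].

Definition tlen (s : seq T) : R :=
  \sum_(p <- zip s (behead s)) d p.1 p.2.

(* generator of the normalized magnitude nerve in chain degree n,
   grading l : (x0,...,xn) with x_i != x_{i+1} and length l *)
Definition gen (n : nat) (l : R) (s : seq T) : bool :=
  [&& size s == n.+1, all (fun p => p.1 != p.2) (zip s (behead s))
    & tlen s == l].

Definition rem_at (i : nat) (s : seq T) : seq T := take i s ++ drop i.+1 s.

(* coefficient of the generator s in the face d^i t: d^i deletes x_i if this
   does not change the total distance, and is 0 otherwise *)
Definition face_coef (i : nat) (t s : seq T) : int :=
  if (rem_at i t == s) && (tlen (rem_at i t) == tlen t) then 1 else 0.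

(* chains: integer coefficient functions on tuples (finite support in the
   relevant generators is imposed separately) *)
Definition chain := seq T -> int.

(* boundary from chain degree n.+1 to chain degree n *)
Definition bd (n : nat) (c : chain) : chain := fun s =>
  \sum_(t : (n.+2).-tuple T)
     c (val t) * \sum_(i < n.+2) ((-1) ^+ i * face_coef i (val t) s).

Definition supported (n : nat) (l : R) (c : chain) : Prop :=
  forall s, c s != 0 -> gen n l s.

Definition is_cycle (n : nat) (l : R) (c : chain) : Prop :=
  supported n l c /\
  match n with 0 => True | m.+1 => forall s, bd m c s = 0 end.

Definition is_boundary (n : nat) (l : R) (c : chain) : Prop :=
  exists b : chain, supported n.+1 l b /\ forall s, c s = bd n b s.

(* a family of k elements of HM_n^l (given by representing cycles) that is
   linearly independent over Z in HM_n^l = cycles / boundaries *)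
Definition HM_indep (n : nat) (l : R) (k : nat) : Prop :=
  exists v : 'I_k -> chain,
    (forall i, is_cycle n l (v i)) /\
    forall a : 'I_k -> int,
      is_boundary n l (fun s => \sum_(i < k) a i * v i s) ->
      forall i, a i = 0.

(* rank of the abelian group HM_n^l(X) = maximal size of a Z-linearly
   independent family; it is bounded by the rank #|T|^(n+1) of the free
   group of n-tuples, so the bounded max below is the actual rank. *)
Definition rkHM (n : nat) (l : R) : nat :=
  \max_(k < (#|T| ^ n.+1).+1 | `[< HM_indep n l k >]) k.

Definition rkC (n : nat) (l : R) : nat :=
  #|[set t : (n.+1).-tuple T | gen n l (val t)]|.

(* Hahn series in Q((q^R)) are represented by their coefficient functions
   l |-> a_l. *)
Definition hahn := R -> rat.

(* Euler characteristic of the realized magnitude nerve B(Sigma X, 1):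
   coefficient of q^l is the (finite) alternating sum of the ranks of the
   grading-l chain groups. *)
Definition chi_nerve : hahn := fun l =>
  (\sum_(n \in [set: nat]) ((-1) ^+ n * (rkC n l)%:Q))%R.

Definition rk_HM_series (n : nat) : hahn := fun l => (rkHM n l)%:Q.

End Magnitude.

(* Convergence of a series sum_n f n of Hahn series to s in the valuation
   topology: the valuation of s - (partial sum) tends to +oo, i.e. for every
   bound L the partial sums eventually agree with s on all exponents < L. *)
Definition hahn_series_converges_to (R : realType)
    (f : nat -> hahn R) (s : hahn R) : Prop :=
  forall L : R, exists N : nat, forall M : nat, (N <= M)%N ->
    forall l : R, l < L -> \sum_(n < M) f n l = s l.

(* Main.v *)
Require Import Defs.
From HB Require Import structures.
From mathcomp Require Import all_boot all_order all_algebra.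
From mathcomp Require Import boolp classical_sets fsbigop reals.
From mathcomp Require Import zify ring.
Import Order.TTheory GRing.Theory Num.Theory.
Local Open Scope ring_scope.
Set Implicit Arguments. Unset Strict Implicit. Unset Printing Implicit Defensive.

Section Seqs.
Variables (R : realType) (T : finType) (d : T -> T -> R).
Hypothesis qm : quasi_metric d.
Implicit Types (x y z : T) (s t : seq T).

Definition adj (s : seq T) := all (fun p => p.1 != p.2) (zip s (behead s)).

Lemma tlen_nil : tlen d [::] = 0.
Proof. by rewrite /tlen big_nil. Qed.

Lemma tlen1 x : tlen d [:: x] = 0.
Proof. by rewrite /tlen /= big_nil. Qed.

Lemma tlen_cons2 x y s : tlen d [:: x, y & s] = d x y + tlen d (y :: s).
Proof. by rewrite /tlen /= big_cons. Qed.

Lemma adj_cons2 x y s : adj [:: x, y & s] = (x != y) && adj (y :: s).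
Proof. by []. Qed.

Lemma rem_at0 x s : rem_at 0 (x :: s) = s.
Proof. by rewrite /rem_at /= drop0. Qed.

Lemma rem_atS i x s : rem_at i.+1 (x :: s) = x :: rem_at i s.
Proof. by []. Qed.

Lemma rem_at_nil i : rem_at i ([::] : seq T) = [::].
Proof. by []. Qed.

Lemma size_rem_at i s : (i < size s)%N -> size (rem_at i s) = (size s).-1.
Proof.
elim: s i => [|x s IH] [|i] //; first by rewrite rem_at0.
by move=> h; rewrite rem_atS /= IH //; case: s {IH} h.
Qed.

Lemma d_ge0 x y : 0 <= d x y.
Proof. by case: qm. Qed.

Lemma d_tri x y z : d x z <= d x y + d y z.
Proof. by case: qm. Qed.

Lemma d_xx x : d x x = 0.
Proof. by case: qm. Qed.

Lemma d_gt0 x y : x != y -> 0 < d x y.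
Proof. by case: qm => _ _ h _; apply: h. Qed.

Lemma tlen_ge0 s : 0 <= tlen d s.
Proof. by rewrite /tlen sumr_ge0 // => p _; apply: d_ge0. Qed.

Lemma tlen_consE x s : tlen d (x :: s) =
  (if s is y :: _ then d x y else 0) + tlen d s.
Proof. by case: s => [|y s]; rewrite ?tlen1 ?tlen_nil ?addr0 ?tlen_cons2. Qed.

Lemma tlen_rem_le i s : tlen d (rem_at i s) <= tlen d s.
Proof.
elim: s i => [|x s IH] [|i]; rewrite ?rem_at_nil ?rem_at0 ?rem_atS //.
  by rewrite tlen_consE lerDr; case: s {IH} => // y s; apply: d_ge0.
rewrite !tlen_consE; case: i => [|i].
  case: s IH => [|y s] IH; rewrite ?rem_at_nil ?rem_at0 //.
  rewrite tlen_consE addrA lerD2r.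
  case: s {IH} => [|z s]; first by rewrite addr0 d_ge0.
  exact: d_tri.
case: s IH => [|y s] IH; rewrite ?rem_at_nil ?rem_atS //.
by rewrite lerD2l -(rem_atS i y s) IH.
Qed.

Lemma adj_rem i s : adj s -> tlen d (rem_at i s) = tlen d s -> adj (rem_at i s).
Proof.
elim: s i => [|x s IH] [|i]; rewrite ?rem_at_nil ?rem_at0 ?rem_atS //.
  by case: s {IH} => // y s; rewrite adj_cons2 => /andP[].
case: s IH => [|y s] IH; rewrite ?rem_at_nil ?rem_atS // adj_cons2 => /andP[xy ays].
case: i => [|i].
  rewrite rem_at0.
  case: s ays {IH} => [|z s] //; rewrite adj_cons2 => /andP[yz azs].
  rewrite !tlen_cons2 => heq.
  rewrite adj_cons2 azs andbT; apply/negP => /eqP xz; subst z.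
  move: heq; rewrite d_xx addrA => /addIr /esym /eqP.
  by rewrite paddr_eq0 ?d_ge0 // (negbTE (lt0r_neq0 (d_gt0 xy))).
rewrite rem_atS !tlen_cons2 => /addrI heq.
rewrite adj_cons2 xy /=; rewrite -rem_atS; apply: IH => //.
Qed.


Lemma rem_at_rem p q s : (p <= q)%N ->
  rem_at q (rem_at p s) = rem_at p (rem_at q.+1 s).
Proof.
elim: s p q => [|x s IH] p q; first by rewrite !rem_at_nil.
case: p => [|p] /=; first by rewrite rem_at0 rem_atS rem_at0.
case: q => [|q] // hpq.
by rewrite !rem_atS IH.
Qed.

Lemma dd_cancel (H : seq T -> int) K t :
  \sum_(p < K.+1) \sum_(q < K) ((-1) ^+ (p + q) * H (rem_at q (rem_at p t))) = 0.
Proof.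
set F := fun p q : nat => (-1) ^+ (p + q) * H (rem_at q (rem_at p t)).
have -> : \sum_(p < K.+1) \sum_(q < K) F p q =
   \sum_(p < K.+1) \sum_(q < K) (if (p <= q)%N then F p q else 0)
 + \sum_(p < K.+1) \sum_(q < K) (if (q < p)%N then F p q else 0).
  rewrite -big_split /=; apply: eq_bigr => p _; rewrite -big_split /=.
  by apply: eq_bigr => q _; case: leqP => _; rewrite ?addr0 ?add0r.
rewrite big_ord_recr /=.
have -> : \sum_(q < K) (if (K <= q)%N then F K q else 0) = 0.
  by apply: big1 => q _; rewrite leqNgt ltn_ord.
rewrite addr0.
rewrite [X in _ + X]exchange_big /=.
have -> : \sum_(j < K) \sum_(i < K.+1) (if (j < i)%N then F i j else 0) =
          - \sum_(j < K) \sum_(i < K) (if (j <= i)%N then F j i else 0).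
  rewrite -sumrN; apply: eq_bigr => j _; rewrite big_ord_recl /= -sumrN.
  rewrite add0r; apply: eq_bigr => i _; rewrite /bump /= add1n ltnS.
  case: leqP => hji //=.
  by rewrite /F -rem_at_rem // addSn exprS mulN1r mulNr addnC.
by rewrite subrr.
Qed.


Lemma clear_den m k (A : 'M[rat]_(m, k)) :
  exists N : nat, (0 < N)%N /\ forall i j, N%:R * A i j \is a Num.int.
Proof.
exists (\prod_(ij : 'I_m * 'I_k) `|denq (A ij.1 ij.2)|%N); split.
  by apply: prodn_gt0 => ij; rewrite absz_gt0 denq_neq0.
move=> i j; rewrite (bigD1 (i, j)) //= natrM mulrAC.
rewrite rpredM ?natr_int // natr_absz ger0_norm ?ltW ?denq_gt0 //.
by rewrite mulrC -numqE intr_int.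
Qed.

Variable l : R.

Definition S n : {set (n.+1).-tuple T} := [set u : (n.+1).-tuple T | gen d n l (val u)].
Definition E n : seq (seq T) := [seq val u | u <- enum (S n)].
Definition g n := size (E n).
Definition e n i := nth [::] (E n) i.

Lemma g_rkC n : rkC d n l = g n.
Proof. by rewrite /g /E size_map -cardE. Qed.

Lemma E_uniq n : uniq (E n).
Proof. by rewrite map_inj_uniq ?enum_uniq //; apply: val_inj. Qed.

Lemma mem_E n s : (s \in E n) = gen d n l s.
Proof.
apply/mapP/idP => [[t]|hs]; first by rewrite mem_enum inE => h ->.
have hsz : size s == n.+1 by case/and3P: hs.
by exists (Tuple hsz); rewrite // mem_enum inE.
Qed.

Lemma e_gen n (i : 'I_(g n)) : gen d n l (e n i).
Proof. by rewrite -mem_E mem_nth. Qed.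

Lemma e_inj n (i j : 'I_(g n)) : (e n i == e n j) = (i == j).
Proof. by rewrite nth_uniq ?E_uniq. Qed.

Lemma sum_tuples m (c F : seq T -> int) : supported d m l c ->
  \sum_(t : (m.+1).-tuple T) c (val t) * F (val t) =
  \sum_(i < g m) c (e m i) * F (e m i).
Proof.
move=> hc.
rewrite (bigID (fun u : (m.+1).-tuple T => u \in S m)) /= [X in _ + X]big1 ?addr0; last first.
  move=> u; rewrite inE => ht; case: (c (val u) =P 0) => [->|/eqP]; first by rewrite mul0r.
  by move/hc; rewrite (negbTE ht).
rewrite -big_enum -(big_map val xpredT (fun s => c s * F s)).
by rewrite (big_nth [::]) big_mkord.
Qed.

Definition coef n t s : int := \sum_(i < n.+2) ((-1) ^+ i * face_coef d i t s).

Definition vec n (c : chain T) : 'rV[rat]_(g n) := \row_i ((c (e n i))%:~R).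

Definition D n : 'M[rat]_(g n.+1, g n) :=
  \matrix_(i, j) ((coef n (e n.+1 i) (e n j))%:~R).

Lemma face_gen n i t s : gen d n.+1 l t -> face_coef d i t s != 0 -> (i < n.+2)%N ->
  gen d n l s.
Proof.
case/and3P => /eqP ht at_ /eqP lt; rewrite /face_coef.
case: ifP => // /andP[/eqP e1 /eqP e2] _ hi; subst s.
rewrite /gen size_rem_at ?ht // eqxx /= -/(adj _) adj_rem // e2 lt eqxx andbT.
by [].
Qed.

Lemma bd_supported n b : supported d n.+1 l b -> supported d n l (bd d n b).
Proof.
move=> hb s; apply: contraR => hs; apply/eqP; apply: big1 => t _.
case: (b (val t) =P 0) => [->|/eqP bt]; first by rewrite mul0r.
rewrite big1 ?mulr0 // => i _.
case: (face_coef d i (val t) s =P 0) => [->|/eqP hf]; first by rewrite mulr0.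
by move: hs; rewrite (face_gen (hb _ bt) hf (ltn_ord i)).
Qed.

Lemma vec_bd n b : supported d n.+1 l b -> vec n (bd d n b) = vec n.+1 b *m D n.
Proof.
move=> hb; apply/rowP => j; rewrite !mxE.
rewrite /bd (sum_tuples (fun t => coef n t (e n j)) hb) rmorph_sum.
by apply: eq_bigr => i _; rewrite !mxE rmorphM.
Qed.

Lemma vec_inj n c1 c2 : supported d n l c1 -> supported d n l c2 ->
  vec n c1 = vec n c2 -> forall s, c1 s = c2 s.
Proof.
move=> h1 h2 hv s; case: (boolP (gen d n l s)) => hs.
  have hi : (index s (E n) < g n)%N by rewrite index_mem mem_E.
  have := congr1 (fun v : 'rV[rat]_(g n) => v 0 (Ordinal hi)) hv; rewrite !mxE /e nth_index ?mem_E //.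
  exact: intr_inj.
case: (c1 s =P 0) => [->|/eqP/h1]; last by rewrite (negbTE hs).
by case: (c2 s =P 0) => [->|/eqP/h2] //; rewrite (negbTE hs).
Qed.

Definition chain_of n (w : 'rV[rat]_(g n)) : chain T := fun s =>
  \sum_(i < g n) (if e n i == s then Num.floor (w 0 i) else 0).

Arguments chain_of n w s : clear implicits.

Lemma chain_of_supp n (w : 'rV[rat]_(g n)) : supported d n l (chain_of n w).
Proof.
move=> s; apply: contraR => hs; apply/eqP; apply: big1 => i _.
by case: eqP => // hi; move: hs; rewrite -hi e_gen.
Qed.

Lemma chain_of_at n (w : 'rV[rat]_(g n)) (j : 'I_(g n)) : chain_of n w (e n j) = Num.floor (w 0 j).
Proof.
rewrite /chain_of (bigD1 j) //= eqxx big1 ?addr0 // => i hij.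
by rewrite e_inj (negbTE hij).
Qed.

Lemma vec_chain_of n (w : 'rV[rat]_(g n)) : (forall j, w 0 j \is a Num.int) -> vec n (chain_of n w) = w.
Proof.
move=> hw; apply/rowP => j; rewrite mxE chain_of_at floorK //.
Qed.


Lemma sum_face n t (G : seq T -> int) : gen d n.+2 l t ->
  \sum_(j < g n.+1) coef n.+1 t (e n.+1 j) * G (e n.+1 j) =
  \sum_(p < n.+3) ((-1) ^+ p *
     (if tlen d (rem_at p t) == tlen d t then G (rem_at p t) else 0)).
Proof.
move=> ht.
rewrite /coef; under eq_bigr => j _ do rewrite mulr_suml.
rewrite exchange_big /=; apply: eq_bigr => p _.
case: ifP => hlp.
  have hg : gen d n.+1 l (rem_at p t).
    apply: (@face_gen n.+1 p t) => //.
    by rewrite /face_coef eqxx hlp.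
  have hj : (index (rem_at p t) (E n.+1) < g n.+1)%N by rewrite index_mem mem_E.
  have ej : e n.+1 (Ordinal hj) = rem_at p t by rewrite /e nth_index ?mem_E.
  rewrite (bigD1 (Ordinal hj)) //= big1 ?addr0.
    by rewrite ej /face_coef eqxx hlp mulr1.
  move=> j; rewrite -e_inj ej /face_coef.
  case: ifP => [/andP[/eqP -> _]|_ _]; first by rewrite eqxx.
  by rewrite mulr0 mul0r.
rewrite mulr0 big1 // => j _; rewrite /face_coef.
by case: ifP => [/andP[/eqP <-]|]; rewrite ?hlp ?andbF ?mulr0 ?mul0r //; rewrite eqxx hlp.
Qed.

Lemma DD n : D n.+1 *m D n = 0.
Proof.
apply/matrixP => i k; rewrite !mxE.
set t := e n.+2 i; set s := e n k.
have -> : \sum_j D n.+1 i j * D n j k =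
   ((\sum_(j < g n.+1) coef n.+1 t (e n.+1 j) * coef n (e n.+1 j) s)%:~R : rat).
  by rewrite rmorph_sum; apply: eq_bigr => j _; rewrite !mxE rmorphM.
rewrite (sum_face (fun w => coef n w s) (e_gen i)).
set H := fun w : seq T => if (w == s) && (tlen d w == tlen d t) then 1 else 0 : int.
suff -> : \sum_(p < n.+3) ((-1) ^+ p *
     (if tlen d (rem_at p t) == tlen d t then coef n (rem_at p t) s else 0)) =
  \sum_(p < n.+3) \sum_(q < n.+2) ((-1) ^+ (p + q) * H (rem_at q (rem_at p t))).
  by rewrite dd_cancel.
apply: eq_bigr => p _; rewrite /coef.
case: ifP => hlp.
  rewrite mulr_sumr; apply: eq_bigr => q _.
  rewrite exprD -mulrA; congr (_ * (_ * _)).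
  by rewrite /face_coef /H (eqP hlp).
rewrite mulr0 big1 // => q _; rewrite /H.
have hlt : tlen d (rem_at q (rem_at p t)) < tlen d t.
  apply: (le_lt_trans (tlen_rem_le _ _)).
  by rewrite lt_neqAle hlp tlen_rem_le.
by rewrite (lt_eqF hlt) andbF mulr0.
Qed.


Definition Zm n : 'M[rat]_(g n) :=
  match n return 'M[rat]_(g n) with 0 => 1%:M | m.+1 => kermx (D m) end.

Lemma supp0 n : supported d n l (fun _ => 0).
Proof. by move=> s; rewrite eqxx. Qed.

Lemma vec0 n : vec n (fun _ => 0) = 0.
Proof. by apply/rowP => j; rewrite !mxE. Qed.

Lemma cycle_vec n c : supported d n l c -> is_cycle d n l c <-> (vec n c <= Zm n)%MS.
Proof.
case: n c => [|m] c hc; first by split => [_|_]; [exact: submx1 | split].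
rewrite /= sub_kermx -vec_bd //; split.
  case=> _ h; apply/eqP; apply/rowP => j; rewrite !mxE h //.
move=> /eqP h; split => // s.
have := vec_inj (bd_supported hc) (@supp0 m); rewrite h vec0.
by move=> /(_ erefl s).
Qed.

Lemma bnd_vec n c : is_boundary d n l c -> (vec n c <= D n)%MS.
Proof.
case=> b [hb hc].
have -> : vec n c = vec n (bd d n b) by apply/rowP => j; rewrite !mxE hc.
by rewrite vec_bd // submxMl.
Qed.

Lemma vec_bnd n c : supported d n l c -> (vec n c <= D n)%MS ->
  exists N : nat, (0 < N)%N /\ is_boundary d n l (fun s => N%:Z * c s).
Proof.
move=> hc /submxP[x hx].
have [N [N0 hN]] := clear_den x.
exists N; split => //.
exists (chain_of n.+1 (N%:R *: x)); split; first exact: chain_of_supp.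
apply: (vec_inj (n:=n)).
- by move=> s; rewrite mulf_eq0 negb_or => /andP[_ /hc].
- exact/bd_supported/chain_of_supp.
rewrite vec_bd; last exact: chain_of_supp.
have -> := @vec_chain_of n.+1 (N%:R *: x); last by move=> j; rewrite mxE hN.
rewrite -scalemxAl -hx; apply/rowP => j; rewrite !mxE rmorphM /=.
by [].
Qed.


Lemma indep_ge n : HM_indep d n l (\rank (Zm n :\: D n)%MS).
Proof.
set Cm := (Zm n :\: D n)%MS.
set W0 := row_base Cm.
have [N [N0 hN]] := clear_den W0.
set W := N%:R *: W0.
have WC : (W <= Cm)%MS by rewrite scalemx_sub // eq_row_base.
have hW : forall i j, W i j \is a Num.int by move=> i j; rewrite mxE hN.
exists (fun i => chain_of n (row i W)); split.
  move=> i; apply/cycle_vec; first exact: chain_of_supp.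
  rewrite vec_chain_of; last by move=> j; rewrite mxE hW.
  by apply: submx_trans (row_sub _ _) (submx_trans WC (diffmxSl _ _)).
move=> a hb.
set c := fun s => \sum_(i < \rank Cm) a i * chain_of n (row i W) s.
have hc : supported d n l c.
  move=> s; apply: contraR => hs; apply/eqP; apply: big1 => i _.
  case: (chain_of n (row i W) s =P 0) => [->|/eqP]; first by rewrite mulr0.
  by move/chain_of_supp; rewrite (negbTE hs).
set u := \row_(i < \rank Cm) ((a i)%:~R : rat).
have vc : vec n c = u *m W.
  apply/rowP => j; rewrite !mxE rmorph_sum /=; apply: eq_bigr => i _.
  rewrite rmorphM /= chain_of_at mxE floorK; last exact: hW.
  by rewrite /u mxE.
have h1 : (u *m W <= (Cm :&: D n))%MS.
  by rewrite sub_capmx -vc bnd_vec // vc (submx_trans (submxMl _ _) WC).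
move: h1; rewrite capmx_diff submx0 -scalemxAr scaler_eq0 pnatr_eq0.
rewrite eqn0Ngt N0 /= => /eqP h0.
have : u = 0.
  apply: (row_free_inj (row_base_free Cm)).
  by rewrite /= h0 mul0mx.
move=> /rowP h i; have := h i; rewrite !mxE.
by move/eqP; rewrite intr_eq0 => /eqP.
Qed.


Lemma indep_le n k : HM_indep d n l k ->
  (k + \rank (Zm n :&: D n)%MS <= \rank (Zm n))%N.
Proof.
case=> v [hv hind].
have hsv : forall i, supported d n l (v i) by move=> i; case: (hv i).
set W : 'M[rat]_(k, g n) := \matrix_(i, j) ((v i (e n j))%:~R).
have rowW : forall i, row i W = vec n (v i) by move=> i; apply/rowP => j; rewrite !mxE.
have P : forall a : 'rV[rat]_k, (a *m W <= D n)%MS -> a = 0.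
  move=> a ha.
  have [N [N0 hN]] := clear_den a.
  set al := fun i => Num.floor (N%:R * a 0 i).
  set c := fun s => \sum_(i < k) al i * v i s.
  have hc : supported d n l c.
    move=> s; apply: contraR => hs; apply/eqP; apply: big1 => i _.
    case: (v i s =P 0) => [->|/eqP]; first by rewrite mulr0.
    by move/hsv; rewrite (negbTE hs).
  have vc : vec n c = (N%:R *: a) *m W.
    apply/rowP => j; rewrite !mxE rmorph_sum /=; apply: eq_bigr => i _.
    rewrite rmorphM /= /al floorK; last exact: hN.
    by rewrite !mxE.
  have hsc : (vec n c <= D n)%MS by rewrite vc -scalemxAl scalemx_sub.
  have [N' [N'0 hb]] := vec_bnd hc hsc.
  have := hind (fun i => N'%:Z * al i).
  have -> : (fun s => \sum_(i < k) N'%:Z * al i * v i s) = (fun s => N'%:Z * c s).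
    by apply: funext => s; rewrite /c mulr_sumr; apply: eq_bigr => i _; rewrite mulrA.
  move=> /(_ hb) hz; apply/rowP => i; rewrite mxE.
  have := hz i; move/eqP; rewrite mulf_eq0 /= -/(Posz 0) eqz_nat eqn0Ngt N'0 /= /al => /eqP hf.
  have : N%:R * a 0 i = 0 by rewrite -(floorK (hN 0 i)) hf.
  by move/eqP; rewrite mulf_eq0 pnatr_eq0 eqn0Ngt N0 /= => /eqP.
have kerW : kermx W = 0.
  apply/row_matrixP => i; rewrite row0; apply: P.
  by rewrite -row_mul mulmx_ker row0 sub0mx.
have rfW : row_free W by rewrite -kermx_eq0 kerW.
have capW : (W :&: D n)%MS = 0.
  apply/row_matrixP => i; rewrite row0.
  have := row_sub i (W :&: D n)%MS; rewrite sub_capmx => /andP[/submxP[a ->] hB].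
  by rewrite (P a hB) mul0mx.
have WZ : (W <= Zm n)%MS.
  by apply/row_subP => i; rewrite rowW -cycle_vec.
have cap2 : (W :&: (Zm n :&: D n))%MS = 0.
  apply/eqP; rewrite -submx0 -capW; apply: capmxS => //; exact: capmxSr.
have := mxrankS (_ : (W + (Zm n :&: D n) <= Zm n)%MS).
rewrite mxrank_disjoint_sum // (eqP rfW) => -> //.
by rewrite addsmx_sub WZ capmxSl.
Qed.


Lemma rank_diff n :
  (\rank (Zm n :\: D n)%MS + \rank (Zm n :&: D n)%MS)%N = \rank (Zm n).
Proof.
rewrite -mxrank_disjoint_sum; first by rewrite addsmx_diff_cap_eq.
apply/eqP; rewrite -submx0 -(capmx_diff (Zm n) (D n)); apply: capmxS => //.
exact: capmxSr.
Qed.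

Lemma rkHM_eq n : rkHM d n l = \rank (Zm n :\: D n)%MS.
Proof.
have hr : (\rank (Zm n :\: D n)%MS < (#|T| ^ n.+1).+1)%N.
  rewrite ltnS; apply: (leq_trans (mxrankS (diffmxSl _ _))).
  apply: (leq_trans (rank_leq_col _)).
  rewrite -card_tuple -g_rkC; exact: max_card.
apply/eqP; rewrite eqn_leq; apply/andP; split.
  apply/bigmax_leqP => k /asboolP hk.
  have := indep_le hk; have := rank_diff n; lia.
apply: (@leq_bigmax_cond _ _ (fun k : 'I_(#|T| ^ n.+1).+1 => nat_of_ord k) (Ordinal hr)).
apply/asboolP; exact: indep_ge.
Qed.


Lemma D_sub_Z n : (D n <= Zm n)%MS.
Proof. by case: n => [|m] /=; [exact: submx1 | rewrite sub_kermx DD]. Qed.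

Lemma hm_b_z n : (rkHM d n l + \rank (D n) = \rank (Zm n))%N.
Proof.
rewrite rkHM_eq -rank_diff.
by have /capmx_idPr -> := D_sub_Z n.
Qed.

Lemma c0_z : rkC d 0 l = \rank (Zm 0).
Proof. by rewrite g_rkC /= mxrank1. Qed.

Lemma cS_z n : rkC d n.+1 l = (\rank (Zm n.+1) + \rank (D n))%N.
Proof. by rewrite g_rkC /= mxrank_ker subnK // rank_leq_row. Qed.

Lemma g0 n : (forall s, ~~ gen d n l s) -> g n = 0%N.
Proof.
move=> h; rewrite /g; case E0: (E n) => [|s es] //.
have : s \in E n by rewrite E0 mem_head.
by rewrite mem_E (negbTE (h s)).
Qed.

Lemma bM n : g n.+1 = 0%N -> \rank (D n) = 0%N.
Proof. by move=> h; apply/eqP; rewrite -leqn0 -h rank_leq_row. Qed.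

End Seqs.

Lemma euler_sum (h c z b : nat -> nat) :
  (forall n, h n + b n = z n)%N -> c 0%N = z 0%N ->
  (forall n, c n.+1 = z n.+1 + b n)%N -> forall M,
  \sum_(n < M.+1) (-1) ^+ n * (h n)%:R + (-1) ^+ M * (b M)%:R =
  \sum_(n < M.+1) (-1) ^+ n * (c n)%:R :> rat.
Proof.
move=> hz c0 cS; elim=> [|M IH].
  by rewrite !big_ord1 !expr0 !mul1r -natrD hz c0.
rewrite big_ord_recr [RHS]big_ord_recr /= -IH cS -(hz M.+1) !natrD exprS.
ring.
Qed.

Lemma delta_ex (R : realType) (T : finType) (d : T -> T -> R) : quasi_metric d ->
  exists2 dl : R, 0 < dl & forall x y, x != y -> dl <= d x y.
Proof.
move=> qm.
have key : forall s : seq (T * T), exists2 dl : R, 0 < dl &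
    forall p, p \in s -> p.1 != p.2 -> dl <= d p.1 p.2.
  elim=> [|p s [dl hdl H]]; first by exists 1.
  case: (boolP (p.1 != p.2)) => hp.
    exists (Num.min dl (d p.1 p.2)); first by rewrite lt_min hdl d_gt0.
    move=> q; rewrite inE => /orP[/eqP ->|hq] hq'; rewrite ge_min ?lexx ?orbT //.
    by rewrite H.
  exists dl => // q; rewrite inE => /orP[/eqP ->|hq] hq'; first by rewrite hq' in hp.
  exact: H.
have [dl hdl H] := key (enum [set: T * T]).
exists dl => // x y hxy.
by have := H (x, y); rewrite mem_enum inE /=; apply.
Qed.

Lemma len_bound (R : realType) (T : finType) (d : T -> T -> R) (dl : R) :
  quasi_metric d -> (forall x y, x != y -> dl <= d x y) ->
  forall s, adj s -> ((size s).-1)%:R * dl <= tlen d s.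
Proof.
move=> qm H; elim=> [|x s IH]; first by rewrite mul0r tlen_nil.
case: s IH => [|y s] IH; first by rewrite mul0r tlen1.
rewrite adj_cons2 tlen_cons2 => /andP[hxy ha] /=.
by rewrite -addn1 natrD mulrDl mul1r addrC lerD ?H ?IH.
Qed.

Unset Implicit Arguments.

Theorem theorem5p9 (R : realType) (T : finType) (d : T -> T -> R) :
  quasi_metric d ->
  hahn_series_converges_to
    (fun n : nat => fun l : R => (-1) ^+ n * rk_HM_series d n l)
    (chi_nerve d).
Proof.
move=> qm L.
have [dl hdl H] := delta_ex qm.
set N0 := Num.Def.archi_bound (`|L| / dl).
have hN0 : `|L| / dl < N0%:R by apply: archi_boundP; rewrite divr_ge0 ?normr_ge0 ?ltW.
have nogen : forall n l, (N0 <= n)%N -> l < L -> forall s, ~~ gen d n l s.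
  move=> n l hn hl s; apply/negP => /and3P[/eqP hs ha /eqP hls].
  have := len_bound qm H ha; rewrite hs /= hls => hb.
  have : n%:R * dl < n%:R * dl.
    apply: (le_lt_trans hb); apply: (lt_le_trans hl).
    apply: (le_trans (ler_norm L)).
    rewrite -ler_pdivrMr //; apply: (ltW (lt_le_trans hN0 _)).
    by rewrite ler_nat.
  by rewrite ltxx.
have gz : forall n l, (N0 <= n)%N -> l < L -> g d l n = 0%N.
  by move=> n l hn hl; apply: g0 => s; exact: (nogen n l hn hl s).
exists N0.+1 => M hM l hl.
rewrite /chi_nerve -(fsbig_widen `I_M); last 2 first.
- by [].
- move=> n [_ /= hn] /=; rewrite g_rkC gz ?mulr0 //.
  by move/negP: hn; rewrite -leqNgt => hn; apply: leq_trans hn; apply: ltnW.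
rewrite -fsbig_ord.
case: M hM => [//|M] hM.
have := euler_sum (c := fun n => rkC d n l) (hm_b_z qm l) (c0_z d l) (cS_z d l) M.
rewrite (bM (l:=l)) ?gz //.
move=> heq; rewrite -[RHS]heq.
have -> : (-1) ^+ M * ((0%N)%:R : rat) = 0 by rewrite mulr0.
by rewrite addr0.
exact: ltnW.
Qed.
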